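(* Let $\mathcal{H}$ be a complex Hilbert space, let $A\in\mathcal{B}(\mathcal{H})$ be a nonzero positive operator, and let $\mathbb{A}=\begin{pmatrix}A&O\\O&A\end{pmatrix}$ on $\mathcal{H}\oplus\mathcal{H}$. Let $T\in\mathcal{B}_A(\mathcal{H})$ and put $\Re_A(T)=\frac{T+T^{\sharp_A}}{2}$, $\Im_A(T)=\frac{T-T^{\sharp_A}}{2i}$. Then $$\omega_A(T)\leq 2\min\left\{\omega_{\mathbb{A}}\left[\begin{pmatrix}\Re_A(T)&O\\\Im_A(T)&O\end{pmatrix}\right],\ \omega_{\mathbb{A}}\left[\begin{pmatrix}O&-i\Im_A(T)\\\Re_A(T)&O\end{pmatrix}\right]\right\}.$$
   Context: For a positive operator $A$ on $\mathcal{H}$, $\langle x,y\rangle_A:=\langle Ax,y\rangle$ and $\|x\|_A:=\sqrt{\langle x,x\rangle_A}$. $\mathcal{B}_A(\mathcal{H})$ is the set of $T\in\mathcal{B}(\mathcal{H})$ with $\mathcal{R}(T^*A)\subseteq\mathcal{R}(A)$; for such $T$, $T^{\sharp_A}$ is the unique solution $X$ of $AX=T^*A$ with $\mathcal{R}(X)\subseteq\overline{\mathcal{R}(A)}$. $\omega_A(T):=\sup\{|\langle Tx,x\rangle_A|:x\in\mathcal{H},\|x\|_A=1\}$. $\omega_{\mathbb{A}}$ is defined analogously on $\mathcal{H}\oplus\mathcal{H}$ with $\langle (x_1,x_2),(y_1,y_2)\rangle_{\mathbb{A}}=\langle x_1,y_1\rangle_A+\langle x_2,y_2\rangle_A$.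 *)

(* Defs.v *)
From HB Require Import structures.
From mathcomp Require Import all_boot all_order all_algebra.
From mathcomp Require Import complex.
From mathcomp Require Import all_classical all_reals.
From mathcomp Require Import ereal.

Set Implicit Arguments. Unset Strict Implicit. Unset Printing Implicit Defensive.
Import Order.TTheory GRing.Theory Num.Theory.
Local Open Scope ring_scope.

(* Complex scalars: C := R[i] for a real field R (realType);
   R[i] is a numClosedFieldType (order: z <= w iff w - z is real nonneg). *)

Section Hilbert.
Variables (R : realType) (H : lmodType R[i]).
Variable ip : H -> H -> R[i].

Definition ipnorm (x : H) : R[i] := sqrtC (ip x x).

Definition is_inner_product : Prop :=
  [/\ forall (a : R[i]) (x y z : H), ip (a *: x + y) z = a * ip x z + ip y z,
      forall x y : H, ip y x = (ip x y)^*,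
      forall x : H, 0 <= ip x x &
      forall x : H, ip x x = 0 -> x = 0].

Definition ip_complete : Prop :=
  forall u : nat -> H,
    (forall e : R[i], 0 < e -> exists N : nat, forall m n : nat,
        (N <= m)%N -> (N <= n)%N -> ipnorm (u m - u n) < e) ->
    exists l : H, forall e : R[i], 0 < e -> exists N : nat, forall n : nat,
        (N <= n)%N -> ipnorm (u n - l) < e.

Definition is_hilbert : Prop := is_inner_product /\ ip_complete.

Definition is_linear_op (f : H -> H) : Prop :=
  forall (a : R[i]) (x y : H), f (a *: x + y) = a *: f x + f y.

Definition bounded_op (f : H -> H) : Prop :=
  is_linear_op f /\ exists M : R[i], forall x : H, ipnorm (f x) <= M * ipnorm x.

Definition positive_op (A : H -> H) : Prop :=
  bounded_op A /\ forall x : H, 0 <= ip (A x) x.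

Definition is_adjoint (T Tstar : H -> H) : Prop :=
  forall x y : H, ip (T x) y = ip x (Tstar y).

Definition range_sub (F A : H -> H) : Prop :=
  forall x : H, exists y : H, F x = A y.

Definition range_sub_closure (F A : H -> H) : Prop :=
  forall x : H, forall e : R[i], 0 < e -> exists y : H, ipnorm (F x - A y) < e.

Definition in_BA (A T Tstar : H -> H) : Prop :=
  bounded_op T /\ range_sub (Tstar \o A) A.

(* X is T^{#_A}: the (unique) solution of A X = T^* A with R(X) ⊆ cl R(A) *)
Definition is_Asharp (A Tstar X : H -> H) : Prop :=
  bounded_op X /\ (forall x : H, A (X x) = Tstar (A x)) /\ range_sub_closure X A.

Definition ipA (A : H -> H) (x y : H) : R[i] := ip (A x) y.
Definition normA (A : H -> H) (x : H) : R[i] := sqrtC (ipA A x x).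

Definition cmod (z : R[i]) : R := complex.Re `|z|.

Definition omegaA (A T : H -> H) : \bar R :=
  ereal_sup [set (cmod (ipA A (T x) x))%:E | x in [set x : H | normA A x = 1]].

(* omega_{\mathbb A} of the operator matrix [[T11, T12], [T21, T22]] on H ⊕ H,
   where \mathbb A = diag(A, A) and
   <(x1,x2),(y1,y2)>_{\mathbb A} = <x1,y1>_A + <x2,y2>_A. *)
Definition omegaA2 (A T11 T12 T21 T22 : H -> H) : \bar R :=
  ereal_sup [set (cmod (ipA A (T11 p.1 + T12 p.2) p.1
                        + ipA A (T21 p.1 + T22 p.2) p.2))%:E
            | p in [set p : H * H |
                    sqrtC (ipA A p.1 p.1 + ipA A p.2 p.2) = 1]].

End Hilbert.

Definition ReA (R : realType) (H : lmodType R[i]) (T X : H -> H) : H -> H :=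
  fun x => (2%:R)^-1 *: (T x + X x).
Definition ImA (R : realType) (H : lmodType R[i]) (T X : H -> H) : H -> H :=
  fun x => (2%:R * 'i)^-1 *: (T x - X x).
Definition zero_op (R : realType) (H : lmodType R[i]) : H -> H := fun _ => 0.

(* Main.v *)
Require Import Defs.
From HB Require Import structures.
From mathcomp Require Import all_boot all_order all_algebra.
From mathcomp Require Import complex.
From mathcomp Require Import all_classical all_reals.
From mathcomp Require Import ereal.
From mathcomp Require Import ring lra.
Import Order.TTheory GRing.Theory Num.Theory.
Local Open Scope ring_scope.

Lemma lin0 (R : realType) (H : lmodType R[i]) (f : H -> H) :
  is_linear_op f -> f 0 = 0.
Proof.
move=> hf; have := hf 1 0 0; rewrite !scale1r addr0 => h.
by apply: (@addrI _ (f 0)); rewrite addr0 -h.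
Qed.

Lemma linZ (R : realType) (H : lmodType R[i]) (f : H -> H) :
  is_linear_op f -> forall c x, f (c *: x) = c *: f x.
Proof. by move=> hf c x; have := hf c x 0; rewrite !addr0 lin0 // addr0. Qed.

Lemma linD (R : realType) (H : lmodType R[i]) (f : H -> H) :
  is_linear_op f -> forall x y, f (x + y) = f x + f y.
Proof. by move=> hf x y; have := hf 1 x y; rewrite !scale1r. Qed.

Arguments lin0 {R H f}.
Arguments linZ {R H f}.
Arguments linD {R H f}.

Section IP.
Variables (R : realType) (H : lmodType R[i]) (ip : H -> H -> R[i]).
Hypothesis hip : is_inner_product ip.

Lemma ip0l z : ip 0 z = 0.
Proof.
have [ipD _ _ _] := hip; have := ipD 1 0 0 z; rewrite scale1r addr0 mul1r => h.
by apply: (@addrI _ (ip 0 z)); rewrite addr0 -h.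
Qed.

Lemma ipZl c x z : ip (c *: x) z = c * ip x z.
Proof. by have [ipD _ _ _] := hip; have := ipD c x 0 z; rewrite addr0 ip0l addr0. Qed.

Lemma ipDl x y z : ip (x + y) z = ip x z + ip y z.
Proof. by have [ipD _ _ _] := hip; have := ipD 1 x y z; rewrite scale1r mul1r. Qed.

Lemma ipZr c x z : ip x (c *: z) = c^* * ip x z.
Proof. by have [_ ipC _ _] := hip; rewrite ipC ipZl rmorphM /= -ipC. Qed.
End IP.
Arguments ip0l {R H ip}.
Arguments ipZl {R H ip}.
Arguments ipDl {R H ip}.
Arguments ipZr {R H ip}.

Lemma ReAZ (R : realType) (H : lmodType R[i]) (T X : H -> H) :
  is_linear_op T -> is_linear_op X -> forall c x, ReA T X (c *: x) = c *: ReA T X x.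
Proof.
move=> hT hX c x; rewrite /ReA (linZ hT) (linZ hX) -scalerDr !scalerA mulrC //.
Qed.

Lemma ImAZ (R : realType) (H : lmodType R[i]) (T X : H -> H) :
  is_linear_op T -> is_linear_op X -> forall c x, ImA T X (c *: x) = c *: ImA T X x.
Proof.
move=> hT hX c x; rewrite /ImA (linZ hT) (linZ hX) -scalerBr !scalerA mulrC //.
Qed.

Lemma decompT (R : realType) (H : lmodType R[i]) (T X : H -> H) x :
  T x = ReA T X x + 'i *: ImA T X x.
Proof.
rewrite /ReA /ImA scalerA.
have -> : 'i * (2%:R * 'i)^-1 = (2%:R : R[i])^-1.
  by field; rewrite neq0Ci.
rewrite -scalerDr addrACA subrr addr0 -[T x in RHS]scale1r -scalerDl scalerA.
by rewrite -[1 + 1]/(2%:R) mulVf ?scale1r // pnatr_eq0.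
Qed.

Arguments decompT {R H}.

Lemma fin_step (R : realType) (S : set (\bar R)) (v w : R[i]) :
  `|v| = `|w| + `|w| -> S (cmod w)%:E -> ((cmod v)%:E <= 2%:E * ereal_sup S)%E.
Proof.
move=> h hS.
have -> : cmod v = cmod w + cmod w by rewrite /cmod h; case: `|w|.
rewrite -mulr2n -[cmod w *+ 2]mulr_natl EFinM; apply: lee_wpmul2l; first by rewrite lee_fin ler0n.
exact: ereal_sup_ubound.
Qed.

Arguments ReAZ {R H T X}.
Arguments ImAZ {R H T X}.

Theorem theorem2p20 (R : realType) (H : lmodType R[i]) (ip : H -> H -> R[i])
  (hH : is_hilbert ip)
  (A : H -> H) (hA : positive_op ip A) (hA0 : exists x : H, A x != 0)
  (T Tstar : H -> H) (hTstar : is_adjoint ip T Tstar) (hT : in_BA ip A T Tstar)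
  (X : H -> H) (hX : is_Asharp ip A Tstar X) :
  (omegaA ip A T <=
   2%:E * Order.min
     (omegaA2 ip A (ReA T X) (@zero_op R H) (ImA T X) (@zero_op R H))
     (omegaA2 ip A (@zero_op R H) (fun x => - 'i *: ImA T X x) (ReA T X) (@zero_op R H)))%E.
Proof.
have [hip _] := hH.
have [[lA _] _] := hA; have [[lT _] _] := hT; have [[lX _] _] := hX.
apply: ge_ereal_sup => _ [x /= hx <-].
have xx : ipA ip A x x = 1.
  by have := sqrtCK (ipA ip A x x); rewrite /normA in hx; rewrite hx expr1n.
set a := sqrtC (2%:R^-1 : R[i]).
have aa : a * a = 2%:R^-1 by rewrite -expr2 sqrtCK.
have ac : a^* = a by rewrite geC0_conj // sqrtC_ge0 invr_ge0 ler0n.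
set r := ip (A (ReA T X x)) x.
set s := ip (A (ImA T X x)) x.
have hv : ipA ip A (T x) x = r + 'i * s.
  by rewrite /ipA (decompT T X x) (linD lA) (linZ lA 'i) (ipDl hip) (ipZl hip 'i).
have hn : sqrtC (ipA ip A (a *: x) (a *: x) + ipA ip A (- 'i * a *: x) (- 'i * a *: x)) = 1.
  rewrite /ipA !(linZ lA) !(ipZl hip) !(ipZr hip) -!/(ipA ip A x x) xx.
  rewrite rmorphM rmorphN /= conjCi ac.
  have -> : a * (a * 1) + - 'i * a * (- - 'i * a * 1) = - ('i * 'i) * (a * a) + a * a by ring.
  rewrite -expr2 sqrCi opprK mul1r aa.
  have -> : (2%:R^-1 + 2%:R^-1 : R[i]) = 1 by field.
  by rewrite sqrtC1.
set b := - 'i * a.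
set v := ipA ip A (T x) x.
rewrite minEle; case: ifP => _.
- apply: (@fin_step _ _ _ (2%:R^-1 * v)).
    by rewrite normrM normfV normr_nat; field.
  exists (a *: x, b *: x); first exact: hn.
  rewrite /= /zero_op !addr0 (ReAZ lT lX) (ImAZ lT lX) /ipA (linZ lA a) (linZ lA a).
  rewrite !(ipZl hip a) !(ipZr hip) -/r -/s; congr (cmod _)%:E; rewrite /v hv.
  rewrite /b rmorphM rmorphN /= conjCi ac -aa; ring.
- apply: (@fin_step _ _ _ (2%:R^-1 * 'i * v)).
    by rewrite !normrM normfV normr_nat normCi; field.
  exists (a *: x, b *: x); first exact: hn.
  rewrite /= /zero_op !addr0 add0r (ReAZ lT lX) (ImAZ lT lX) /ipA (linZ lA a) scalerA (linZ lA).
  rewrite !(ipZl hip) !(ipZr hip) -/r -/s; congr (cmod _)%:E; rewrite /v hv.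
  rewrite /b rmorphM rmorphN /= conjCi ac -aa; ring.
Qed.
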